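(* Let $m,n,p$ be positive integers, $R$ a real $m\times n$ matrix, $K$ a real $p\times n$ matrix and $v\in\mathbb{R}^n$, and assume $\{y\in\mathbb{R}^n:Ky\ge0,\ Ry=0,\ v\cdot y\le0\}=\{0\}$. Let $\pi\in\mathbb{R}^m$ and $\kappa\in\mathbb{R}^p$ satisfy $v'=\pi'R+\kappa'K$. Let $\mathcal{M}=\{a\in\mathbb{R}^m:a'R=b'K\text{ for some }b\in\mathbb{R}^p\}$, suppose $d=\dim\mathcal{M}>0$, let $M$ be a $d\times m$ matrix whose rows form a basis of $\mathcal{M}$, and let $G$ be a $d\times p$ matrix with $MR=GK$. Let $\mathcal{U}=\mathcal{K}\cap\mathbb{R}^p_+$, where $\mathcal{K}$ is the range of $K$. Then $\{u\in\mathcal{U}:Gu=0\text{ and }\kappa\cdot u\le0\}=\{0\}$.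
   Context: Vector inequalities such as $Ky\ge0$ are componentwise; $\mathbb{R}^p_+$ is the nonnegative orthant. *)

(* Defs.v *)
From mathcomp Require Import all_boot all_order all_algebra.
Set Implicit Arguments. Unset Strict Implicit. Unset Printing Implicit Defensive.
Import Order.TTheory GRing.Theory Num.Theory.
Local Open Scope ring_scope.

(* Vectors of R^k are column vectors 'cV_k; u' is u^T.
   Componentwise nonnegativity of a column vector. *)
Definition nonneg_cv (F : realFieldType) (k : nat) (u : 'cV[F]_k) : Prop :=
  forall i : 'I_k, 0 <= u i 0.

Definition dotcv (F : realFieldType) (k : nat) (x y : 'cV[F]_k) : F :=
  (x^T *m y) 0 0.

(* Main.v *)
Require Import Defs.
From mathcomp Require Import all_boot all_order all_algebra.
Import Order.TTheory GRing.Theory Num.Theory.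
Local Open Scope ring_scope.

Lemma dual_sub (F : fieldType) k p n (B : 'M[F]_(p, n)) (C : 'M[F]_(k, n)) :
  C *m (kermx B^T)^T = 0 -> (C <= B)%MS.
Proof.
move=> HC.
have sBX : (B <= kermx (kermx B^T)^T)%MS.
  by apply/sub_kermxP; apply: trmx_inj; rewrite trmx_mul trmxK mulmx_ker trmx0.
have XB : (kermx (kermx B^T)^T <= B)%MS.
  rewrite -(mxrank_leqif_sup sBX).
  rewrite mxrank_ker mxrank_tr mxrank_ker mxrank_tr subKn //.
  exact: rank_leq_col.
apply: submx_trans XB; exact/sub_kermxP.
Qed.

Theorem lemma3p1 (F : realFieldType) (m n p : nat)
  (hm : (0 < m)%N) (hn : (0 < n)%N) (hp : (0 < p)%N)
  (R : 'M[F]_(m, n)) (K : 'M[F]_(p, n)) (v : 'cV[F]_n)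
  (hyp : forall y : 'cV[F]_n,
     (nonneg_cv (K *m y) /\ R *m y = 0 /\ dotcv v y <= 0) <-> y = 0)
  (pi : 'cV[F]_m) (kappa : 'cV[F]_p)
  (hv : v^T = pi^T *m R + kappa^T *m K)
  (d : nat) (hd : (0 < d)%N) (M : 'M[F]_(d, m))
  (hMfree : row_free M)
  (hMspan : forall a : 'cV[F]_m,
     (a^T <= M)%MS <-> exists b : 'cV[F]_p, a^T *m R = b^T *m K)
  (G : 'M[F]_(d, p)) (hG : M *m R = G *m K) :
  forall u : 'cV[F]_p,
    ((exists y : 'cV[F]_n, u = K *m y) /\ nonneg_cv u /\
     G *m u = 0 /\ dotcv kappa u <= 0) <-> u = 0.
Proof.
move=> u; split; last first.
  move=> ->; split; first by exists 0; rewrite mulmx0.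
  split; first by move=> i; rewrite mxE.
  by rewrite mulmx0; split => //; rewrite /dotcv mulmx0 mxE.
move=> [[y ->] [Hnn [HG Hk]]].
have MRy : M *m (R *m y) = 0 by rewrite mulmxA hG -mulmxA.
pose S := kermx K^T *m R^T.
have wS : ((R *m y)^T <= S)%MS.
  apply: dual_sub; apply: trmx_inj; rewrite trmx_mul !trmxK trmx0.
  apply/row_matrixP => i; rewrite row_mul row0.
  set a := row i (kermx S^T).
  have aR : a *m S^T = 0 by rewrite /a -row_mul mulmx_ker row0.
  have aM : (a^T^T <= M)%MS.
    apply/hMspan.
    have : ((a *m R) <= K)%MS.
      apply: dual_sub; rewrite -mulmxA.
      by move: aR; rewrite /S trmx_mul trmxK.
    by case/submxP => D HD; exists D^T; rewrite !trmxK HD.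
  rewrite trmxK in aM; case/submxP: aM => D ->.
  by rewrite -mulmxA MRy mulmx0.
case/submxP: wS => D HD.
pose z := (D *m kermx K^T)^T.
have Kz : K *m z = 0.
  by apply: trmx_inj; rewrite /z trmx_mul trmxK -mulmxA mulmx_ker mulmx0 trmx0.
have Rz : R *m z = R *m y.
  by apply: trmx_inj; rewrite /z trmx_mul trmxK HD /S mulmxA.
have Ky' : K *m (y - z) = K *m y by rewrite mulmxBr Kz subr0.
have : y - z = 0.
  apply/hyp; rewrite Ky'; split => //; split; first by rewrite mulmxBr Rz subrr.
  rewrite /dotcv hv mulmxDl -!mulmxA Ky' mulmxBr Rz subrr mulmx0 add0r.
  exact: Hk.
by move=> H0; rewrite -Ky' H0 mulmx0.
Qed.
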